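(* Let $1\le k\le m$, let $\phi_{m,k}$ be the automorphism of the free group $F(A_1,\dots,A_m,B_1,\dots,B_k)$ described below, and let $\bar B_k$ be the image of $B_k$ in the abelianization $\mathbb Z^{m+k}$. Then $\|\phi_{m,k}^n(B_k)\|\sim|(\phi_{m,k}^{ab})^n(\bar B_k)|_1\sim|(\phi_{m,k}^{ab})^n(\bar B_k)|_\infty\sim n^k$.
   Context: $\phi_{m,k}(A_i)=A_1\cdots A_{i-1}A_iA_{i-1}^{-1}\cdots A_1^{-1}$ for $1\le i\le m$, and $\phi_{m,k}(B_j)=A_1\cdots A_m(B_1\cdots B_j)A_{j-1}^{-1}\cdots A_1^{-1}$ for $1\le j\le k$. $\|\cdot\|$ is word length with respect to the free basis; $|\cdot|_1$ and $|\cdot|_\infty$ are the $\ell_1$ and $\ell_\infty$ norms of integer vectors with respect to the basis of images of $A_i,B_j$; $\phi^{ab}$ is the induced automorphism of the abelianization. $f\sim g$ means $f\le Ag+B$ and $g\le A'f+B'$ for some constants $A,A'>0$, $B,B'\ge0$. *)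

(* Defs.v *)
From mathcomp Require Import all_boot all_order all_algebra.
Set Implicit Arguments. Unset Strict Implicit. Unset Printing Implicit Defensive.
Import Order.TTheory GRing.Theory Num.Theory.

(* Generators are coded by natural numbers: A_i (1<=i<=m) is (i-1),
   B_j (1<=j<=k) is (m + j - 1).  A letter is (generator, is_inverse). *)
Definition letter := (nat * bool)%type.
Definition word := seq letter.

Definition reduce (w : word) : word :=
  foldr (fun x s => match s with
                    | y :: s' => if (y.1 == x.1) && (y.2 != x.2) then s' else x :: s
                    | [::] => [:: x] end) [::] w.

Definition inv_word (w : word) : word := rev (map (fun x => (x.1, ~~ x.2)) w).

Definition Aprefix (p : nat) : word := [seq (i, false) | i <- iota 0 p].
Definition Bprefix (m j : nat) : word := [seq (m + i, false) | i <- iota 0 j].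

Definition phi_gen (m k g : nat) : word :=
  if g < m then
    (* A_i with i = g+1 :  A_1..A_{i-1} A_i A_{i-1}^{-1}..A_1^{-1} *)
    Aprefix g ++ [:: (g, false)] ++ inv_word (Aprefix g)
  else
    (* B_j with j = g-m+1 : A_1..A_m B_1..B_j A_{j-1}^{-1}..A_1^{-1} *)
    let j := (g - m).+1 in Aprefix m ++ Bprefix m j ++ inv_word (Aprefix j.-1).

(* the endomorphism phi_{m,k} on (reduced representatives of) group elements *)
Definition phi_word (m k : nat) (w : word) : word :=
  reduce (flatten (map (fun x => if x.2 then inv_word (phi_gen m k x.1)
                                 else phi_gen m k x.1) w)).

Definition Bk (m k : nat) : word := [:: (m + k.-1, false)].

Definition phi_len (m k n : nat) : nat := size (iter n (phi_word m k) (Bk m k)).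

Definition ab_word (m k : nat) (w : word) : 'cV[int]_(m + k) :=
  \col_(i < m + k) (\sum_(x <- w | x.1 == (i : nat)) (if x.2 then -1 else 1 : int))%R.

Definition phi_ab (m k : nat) : 'M[int]_(m + k) :=
  \matrix_(i < m + k, j < m + k) (ab_word m k (phi_gen m k j)) i ord0.

Definition phi_ab_iter (m k n : nat) : 'cV[int]_(m + k) :=
  ((phi_ab m k) ^+ n *m ab_word m k (Bk m k))%R.

Definition l1norm (p : nat) (v : 'cV[int]_p) : nat := \sum_(i < p) absz (v i ord0).
Definition linfnorm (p : nat) (v : 'cV[int]_p) : nat := \max_(i < p) absz (v i ord0).

Definition asym_equiv (f g : nat -> nat) : Prop :=
  exists (A B A' B' : rat), (0 < A)%R /\ (0 <= B)%R /\ (0 < A')%R /\ (0 <= B')%R /\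
    forall n, ((f n)%:R <= A * (g n)%:R + B)%R /\ ((g n)%:R <= A' * (f n)%:R + B')%R.

(* Main.v *)
Require Import Defs.
From mathcomp Require Import all_boot all_order all_algebra zify.
Set Implicit Arguments. Unset Strict Implicit. Unset Printing Implicit Defensive.
Import GRing.Theory Num.Theory.

Definition step (x : letter) (s : word) : word :=
  match s with
  | y :: s' => if (y.1 == x.1) && (y.2 != x.2) then s' else x :: s
  | [::] => [:: x] end.

Lemma reduceE w : reduce w = foldr step [::] w. Proof. by []. Qed.
Lemma reduce_cons x w : reduce (x :: w) = step x (reduce w). Proof. by []. Qed.

Fixpoint redd (s : word) : bool :=
  match s with
  | x :: ((y :: _) as s') => ~~ ((y.1 == x.1) && (y.2 != x.2)) && redd s'
  | _ => true end.

Definition linv (x : letter) : letter := (x.1, ~~ x.2).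
Lemma linvK x : linv (linv x) = x. Proof. by case: x => a b; rewrite /linv /= negbK. Qed.

Lemma redd_cons x s : redd (x :: s) -> redd s.
Proof. by case: s => //= y s /andP[]. Qed.

Lemma step_red x s : redd s -> redd (step x s).
Proof.
case: s => [//|y s] /= H.
case: ifP => C; first by move: H; case: s => //= z s /andP[].
by rewrite /= C H.
Qed.

Lemma red_R w : redd (reduce w).
Proof. by elim: w => //= x w IH; apply: step_red. Qed.

Lemma R_id s : redd s -> reduce s = s.
Proof.
elim: s => // x s IH H; rewrite reduce_cons IH; last exact: redd_cons H.
case: s H {IH} => //= y s /andP[C _]; by rewrite (negbTE C).
Qed.

Lemma RR w : reduce (reduce w) = reduce w.
Proof. exact: R_id (red_R w). Qed.

Lemma letter_eq (x y : letter) : x.1 = y.1 -> x.2 = y.2 -> x = y.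
Proof. by case: x; case: y => /= ? ? ? ? -> ->. Qed.

Lemma step_cancel x t : redd t -> step x (step (linv x) t) = t.
Proof.
case: t => [|z t] /=.
  by case: x => a [] /=; rewrite eqxx.
case: ifP => C H.
  move/andP: C => [/eqP C1 C2].
  have zx : z = x.
    apply: letter_eq => //. move: C2; case: (z.2); case: (x.2) => //.
  subst z.
  case: t H => [|y t] //= /andP[D _]. by rewrite (negbTE D).
by case: x {C H} => a [] /=; rewrite eqxx.
Qed.

Lemma step_cancel' x t : redd t -> step (linv x) (step x t) = t.
Proof. move=> H; rewrite -{2}(linvK x); exact: step_cancel. Qed.

Lemma R_cat u v : reduce (u ++ v) = foldr step (reduce v) u.
Proof. by rewrite reduceE foldr_cat. Qed.

Lemma R_catr u v : reduce (u ++ reduce v) = reduce (u ++ v).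
Proof. by rewrite !R_cat RR. Qed.

Lemma cancel_cond x y : (y.1 == x.1) && (y.2 != x.2) -> y = linv x.
Proof.
move=> /andP[/eqP C1 C2]; apply: letter_eq => //=.
by move: C2; case: (y.2); case: (x.2).
Qed.

Lemma R_step_cat x s v : reduce (step x s ++ v) = step x (reduce (s ++ v)).
Proof.
case: s => [//|y s].
rewrite {1}/step; case: ifP => C //.
rewrite (cancel_cond C) cat_cons reduce_cons step_cancel //; exact: red_R.
Qed.

Lemma R_catR u v : reduce (reduce u ++ v) = reduce (u ++ v).
Proof.
elim: u => //= x u IH.
by rewrite R_step_cat IH.
Qed.

Lemma eqv_cat u u' v v' : reduce u = reduce u' -> reduce v = reduce v' ->
  reduce (u ++ v) = reduce (u' ++ v').
Proof. by move=> H1 H2; rewrite -R_catR -R_catr H1 H2 R_catR R_catr. Qed.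

Lemma eqv_catl u v v' : reduce v = reduce v' -> reduce (u ++ v) = reduce (u ++ v').
Proof. by move=> H; apply: eqv_cat. Qed.

Lemma eqv_catr u u' v : reduce u = reduce u' -> reduce (u ++ v) = reduce (u' ++ v).
Proof. by move=> H; apply: eqv_cat. Qed.

Lemma inv_cons x u : inv_word (x :: u) = inv_word u ++ [:: linv x].
Proof. by rewrite /inv_word map_cons rev_cons cats1. Qed.

Lemma inv_cat u v : inv_word (u ++ v) = inv_word v ++ inv_word u.
Proof. by rewrite /inv_word map_cat rev_cat. Qed.

Lemma inv1 x : inv_word [:: x] = [:: linv x]. Proof. by []. Qed.

Lemma invK u : inv_word (inv_word u) = u.
Proof.
elim: u => // x u IH. by rewrite inv_cons inv_cat IH inv1 linvK.
Qed.

Lemma size_inv u : size (inv_word u) = size u.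
Proof. by rewrite /inv_word size_rev size_map. Qed.

Lemma cancel_l u v : reduce (u ++ inv_word u ++ v) = reduce v.
Proof.
elim: u v => // x u IH v.
rewrite inv_cons cat_cons -catA cat1s reduce_cons IH reduce_cons step_cancel //; exact: red_R.
Qed.

Lemma cancel_r u v : reduce (inv_word u ++ u ++ v) = reduce v.
Proof. by rewrite -{2}(invK u) cancel_l. Qed.

Lemma cancel_l0 u : reduce (u ++ inv_word u) = [::].
Proof. by have := cancel_l u [::]; rewrite cats0. Qed.

Lemma eqv_inv u v : reduce u = reduce v -> reduce (inv_word u) = reduce (inv_word v).
Proof.
move=> H.
transitivity (reduce (inv_word u ++ (v ++ inv_word v))).
  by rewrite -{1}[inv_word u]cats0; apply: eqv_catl; rewrite cancel_l0.
rewrite -(cancel_r u (inv_word v)); apply: eqv_catl; exact: eqv_catr.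
Qed.

Lemma size_R w : size (reduce w) <= size w.
Proof.
elim: w => // x w IH; rewrite reduce_cons.
case: (reduce w) IH => [|y s]; first by [].
rewrite /step; case: ifP => _ /= IH; lia.
Qed.

Lemma size_R_cat u v : size (reduce (u ++ v)) <= size (reduce u) + size (reduce v).
Proof. by rewrite -R_catR -R_catr; apply: leq_trans (size_R _) _; rewrite size_cat. Qed.

Definition img (m k : nat) (x : letter) : word :=
  if x.2 then inv_word (phi_gen m k x.1) else phi_gen m k x.1.
Definition Phi (m k : nat) (w : word) : word := flatten (map (img m k) w).

Lemma phi_wordE m k w : phi_word m k w = reduce (Phi m k w). Proof. by []. Qed.
Lemma Phi_cons m k x w : Phi m k (x :: w) = img m k x ++ Phi m k w. Proof. by []. Qed.
Lemma Phi_cat m k u v : Phi m k (u ++ v) = Phi m k u ++ Phi m k v.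
Proof. by rewrite /Phi map_cat flatten_cat. Qed.
Lemma Phi_nil m k : Phi m k [::] = [::]. Proof. by []. Qed.

Lemma img_linv m k x : img m k (linv x) = inv_word (img m k x).
Proof. by case: x => a []; rewrite /img /= ?invK. Qed.

Lemma Phi_inv m k w : Phi m k (inv_word w) = inv_word (Phi m k w).
Proof.
elim: w => // x w IH.
by rewrite inv_cons Phi_cat IH Phi_cons inv_cat /Phi /= cats0 -img_linv.
Qed.

Lemma R_Phi_step m k x s : reduce (Phi m k (step x s)) = reduce (img m k x ++ Phi m k s).
Proof.
case: s => [//|y s].
rewrite {1}/step; case: ifP => C //.
by rewrite (cancel_cond C) Phi_cons img_linv cancel_l.
Qed.

Lemma R_Phi_R m k w : reduce (Phi m k (reduce w)) = reduce (Phi m k w).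
Proof.
elim: w => // x w IH.
rewrite reduce_cons R_Phi_step Phi_cons -R_catr IH R_catr. by [].
Qed.

Lemma Phi_eqv m k u v : reduce u = reduce v -> reduce (Phi m k u) = reduce (Phi m k v).
Proof. by move=> H; rewrite -R_Phi_R H R_Phi_R. Qed.

Definition Phin m k n w := iter n (Phi m k) w.

Lemma PhinS m k n w : Phin m k n.+1 w = Phi m k (Phin m k n w). Proof. by []. Qed.
Lemma PhinSr m k n w : Phin m k n.+1 w = Phin m k n (Phi m k w).
Proof. by rewrite /Phin iterSr. Qed.

Lemma Phin_cat m k n u v : Phin m k n (u ++ v) = Phin m k n u ++ Phin m k n v.
Proof. elim: n => // n IH. by rewrite !PhinS IH Phi_cat. Qed.
Lemma Phin_inv m k n u : Phin m k n (inv_word u) = inv_word (Phin m k n u).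
Proof. elim: n => // n IH. by rewrite !PhinS IH Phi_inv. Qed.
Lemma Phin_eqv m k n u v : reduce u = reduce v -> reduce (Phin m k n u) = reduce (Phin m k n v).
Proof. elim: n => // n IH H. rewrite !PhinS. apply: Phi_eqv. exact: IH. Qed.
Lemma Phin_nil m k n : Phin m k n [::] = [::].
Proof. elim: n => // n IH. by rewrite PhinS IH. Qed.

Lemma iter_phi m k n w : reduce w = w -> iter n (phi_word m k) w = reduce (Phin m k n w).
Proof.
move=> H; elim: n => [|n IH]; first by rewrite H.
by rewrite iterS IH phi_wordE R_Phi_R.
Qed.

Fixpoint Pw (r n : nat) : word :=
  if r is r'.+1 then Pw r' n ++ nseq n (r', false) else [::].

Lemma size_Pw r n : size (Pw r n) = r * n.
Proof. elim: r => //= r IH. rewrite size_cat IH size_nseq. lia. Qed.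

Lemma Pw0 r : Pw r 0 = [::].
Proof. by elim: r => //= r ->. Qed.

Lemma Aprefix_S r : Aprefix r.+1 = Aprefix r ++ [:: (r, false)].
Proof. by rewrite /Aprefix -addn1 iotaD map_cat. Qed.

Lemma Aprefix_Pw r : Aprefix r = Pw r 1.
Proof. elim: r => // r IH. by rewrite Aprefix_S IH. Qed.

Lemma gen_A m k r : r < m -> phi_gen m k r = Aprefix r ++ (r, false) :: inv_word (Aprefix r).
Proof. by move=> h; rewrite /phi_gen h. Qed.

Lemma Phi_nseq m k r n : r < m ->
  reduce (Phi m k (nseq n (r, false))) =
  reduce (Aprefix r ++ nseq n (r, false) ++ inv_word (Aprefix r)).
Proof.
move=> h; elim: n => [|n IH].
  by rewrite [nseq 0 _]/= cat0s cancel_l0.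
rewrite [nseq n.+1 _]/= Phi_cons {1}/img [(_,_).2]/= [(_,_).1]/= gen_A //.
rewrite -catA; apply: eqv_catl.
rewrite !cat_cons !reduce_cons; congr step.
by rewrite -R_catr IH R_catr cancel_r.
Qed.

Lemma Phi_Pw m k r n : r <= m ->
  reduce (Phi m k (Pw r n)) = reduce (Pw r n.+1 ++ inv_word (Aprefix r)).
Proof.
elim: r => [//|r IH] h.
have hr : r < m by [].
transitivity (reduce ((Pw r n.+1 ++ inv_word (Aprefix r)) ++
               (Aprefix r ++ nseq n (r, false) ++ inv_word (Aprefix r)))).
  rewrite [Pw r.+1 n]/= Phi_cat; apply: eqv_cat; first exact: IH (ltnW hr).
  exact: Phi_nseq.
rewrite [Pw r.+1 n.+1]/= -!catA; apply: eqv_catl.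
rewrite cancel_r Aprefix_S inv_cat inv1.
change ((r,false) :: nseq n (r,false)) with (nseq n.+1 (r,false)).
rewrite -addn1 nseqD -catA; apply: eqv_catl.
by rewrite -inv1 cancel_l.
Qed.

Lemma Phin_A m k r n : r <= m ->
  reduce (Phin m k n (Aprefix r)) = reduce (Pw r n.+1 ++ inv_word (Pw r n)).
Proof.
move=> h; elim: n => [|n IH].
  by rewrite Pw0 /= cats0 Aprefix_Pw.
rewrite PhinS.
transitivity (reduce (Phi m k (Pw r n.+1 ++ inv_word (Pw r n)))).
  exact: Phi_eqv.
rewrite Phi_cat Phi_inv.
transitivity (reduce ((Pw r n.+2 ++ inv_word (Aprefix r)) ++
                       inv_word (Pw r n.+1 ++ inv_word (Aprefix r)))).
  apply: eqv_cat; first exact: Phi_Pw.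
  apply: eqv_inv; exact: Phi_Pw.
by rewrite inv_cat invK -!catA; apply: eqv_catl; rewrite cancel_r.
Qed.

Definition Bs (m : nat) (s : seq nat) : word := [seq (m + i, false) | i <- s].

Lemma gen_B m k j : phi_gen m k (m + j) = Aprefix m ++ Bprefix m j.+1 ++ inv_word (Aprefix j).
Proof. by rewrite /phi_gen ltnNge leq_addr /= addKn. Qed.

Lemma Phi1B m k j : Phi m k [:: (m + j, false)] =
  Aprefix m ++ ([:: (m + 0, false)] ++ Bs m (iota 1 j)) ++ inv_word (Aprefix j).
Proof. by rewrite Phi_cons Phi_nil cats0 /img [(_,_).2]/= [(_,_).1]/= gen_B. Qed.

Lemma PhinB0 m k n : reduce (Phin m k n [:: (m + 0, false)]) = reduce (Pw m n ++ [:: (m + 0, false)]).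
Proof.
elim: n => [|n IH]; first by rewrite Pw0.
rewrite PhinSr Phi1B /= ?cats0 !Phin_cat ?Phin_nil ?cats0.
transitivity (reduce ((Pw m n.+1 ++ inv_word (Pw m n)) ++ (Pw m n ++ [:: (m + 0, false)]))).
  apply: eqv_cat => //; exact: Phin_A.
by rewrite -catA; apply: eqv_catl; rewrite cancel_r.
Qed.

Lemma PhinB m k n j : j <= m ->
  reduce (Phin m k n.+1 [:: (m + j, false)]) =
  reduce (Pw m n.+1 ++ [:: (m + 0, false)] ++ Phin m k n (Bs m (iota 1 j)) ++
          inv_word (Pw j n.+1 ++ inv_word (Pw j n))).
Proof.
move=> hj.
rewrite PhinSr Phi1B !Phin_cat Phin_inv.
transitivity (reduce ((Pw m n.+1 ++ inv_word (Pw m n)) ++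
   ((Pw m n ++ [:: (m + 0, false)]) ++ Phin m k n (Bs m (iota 1 j))) ++
   inv_word (Pw j n.+1 ++ inv_word (Pw j n)))).
  apply: eqv_cat; first exact: Phin_A.
  apply: eqv_cat; first by apply: eqv_catr; exact: PhinB0.
  apply: eqv_inv; exact: Phin_A.
by rewrite -!catA; apply: eqv_catl; rewrite cancel_r.
Qed.

Lemma bern a j : a ^ j.+1 + j.+1 * a ^ j <= a.+1 ^ j.+1.
Proof.
elim: j => [|j IH]; first by rewrite !expn1 expn0; lia.
rewrite (expnS a.+1) (expnS a j.+1).
have : a.+1 * (a ^ j.+1 + j.+1 * a ^ j) <= a.+1 * a.+1 ^ j.+1 by rewrite leq_mul2l IH orbT.
rewrite expnS. nia.
Qed.

Definition lenB m k n j := size (reduce (Phin m k n [:: (m + j, false)])).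

Lemma size_Bs m k n s B : (forall i, i \in s -> lenB m k n i <= B) ->
  size (reduce (Phin m k n (Bs m s))) <= size s * B.
Proof.
elim: s => [|i s IH] H; first by rewrite Phin_nil.
rewrite /Bs map_cons -cat1s Phin_cat.
apply: leq_trans (size_R_cat _ _) _.
rewrite /= mulSn leq_add //; first by apply: H; rewrite inE eqxx.
apply: IH => i' hi'; apply: H; by rewrite inE hi' orbT.
Qed.

Lemma size_R4 a b c d : size (reduce (a ++ b ++ c ++ d)) <=
   size a + size b + size (reduce c) + size d.
Proof.
apply: leq_trans (size_R_cat _ _) _.
have := size_R a.
have := size_R_cat b (c ++ d).
have := size_R b.
have := size_R_cat c d.
have := size_R d.
lia.
Qed.

Lemma lenB_bound m k n j : j < k -> k <= m ->
  lenB m k n j <= (m + 2 * k + 2) * (n.+1) ^ j.+1.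
Proof.
move=> hj hk; set K := m + 2 * k + 2.
have K1 : 1 <= K by rewrite /K; lia.
elim: n j hj => [|n IH] j hj.
  by rewrite /lenB /= exp1n muln1.
case: j hj => [|j] hj.
  rewrite /lenB PhinB0.
  apply: leq_trans (size_R _) _. rewrite size_cat size_Pw /= expn1. rewrite /K; nia.
rewrite /lenB PhinB; last by lia.
apply: leq_trans (size_R4 _ _ _ _) _.
rewrite (_ : iota 1 j.+1 = iota 1 j ++ [:: 1 + j]); last by rewrite -[j.+1]addn1 iotaD.
rewrite /Bs map_cat -/(Bs m _) Phin_cat.
set a := n.+1 ^ j.+1.
have ha : n.+1 <= a by rewrite /a -{1}(expn1 n.+1) leq_pexp2l.
have h1 : size (reduce (Phin m k n (Bs m (iota 1 j)))) <= j * (K * a).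
  have := @size_Bs m k n (iota 1 j) (K * a); rewrite size_iota; apply => i.
  rewrite mem_iota => /andP[i1 i2].
  apply: leq_trans (IH i _) _; first by lia.
  rewrite leq_mul2l leq_pexp2l ?orbT //; lia.
have h2 : size (reduce (Phin m k n [:: (m + (1 + j), false)])) <= K * (n.+1 * a).
  rewrite add1n /=. apply: leq_trans (IH j.+1 hj) _. by rewrite /a -expnS.
have h3 := size_R_cat (Phin m k n (Bs m (iota 1 j))) (Phin m k n [:: (m + (1 + j), false)]).
have hb := bern n.+1 j.+1.
rewrite -/a expnS -/a in hb.
rewrite size_Pw size_inv size_cat size_inv !size_Pw /=.
have hK : m + 2 * j + 4 <= K by rewrite /K; lia.
have : K * (n.+2 ^ j.+2) >= K * (n.+1 * a + j.+2 * a) by rewrite leq_mul2l hb orbT.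
have hA : (m + 2 * j + 4) * n.+1 <= K * a.
  apply: leq_trans (_ : K * n.+1 <= _); first by rewrite leq_mul2r hK orbT.
  by rewrite leq_mul2l ha orbT.
rewrite /= in h3.
nia.
Qed.

Definition sgnl (x : letter) : int := if x.2 then (-1)%R else 1%R.
Definition cnt (i : nat) (w : word) : int := (\sum_(x <- w | x.1 == i) sgnl x)%R.

Lemma cnt_nil i : cnt i [::] = 0%R. Proof. by rewrite /cnt big_nil. Qed.
Lemma cnt_cons i x w : cnt i (x :: w) = ((if x.1 == i then sgnl x else 0) + cnt i w)%R.
Proof. by rewrite /cnt big_cons; case: ifP => //; rewrite add0r. Qed.
Lemma cnt_cat i u v : cnt i (u ++ v) = (cnt i u + cnt i v)%R.
Proof. by rewrite /cnt big_cat. Qed.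

Lemma cnt_step i x s : cnt i (step x s) = cnt i (x :: s).
Proof.
case: s => [//|y s]; rewrite {1}/step; case: ifP => C //.
rewrite (cancel_cond C) !cnt_cons /linv /sgnl /=.
case: (x.1 == i); case: (x.2) => /=; rewrite ?addr0 ?addrA ?add0r //.
Qed.

Lemma cnt_R i w : cnt i (reduce w) = cnt i w.
Proof. elim: w => // x w IH. by rewrite reduce_cons cnt_step !cnt_cons IH. Qed.

Lemma cnt_eqv i u v : reduce u = reduce v -> cnt i u = cnt i v.
Proof. by move=> H; rewrite -cnt_R H cnt_R. Qed.

Lemma cnt_inv i w : cnt i (inv_word w) = (- cnt i w)%R.
Proof.
elim: w => [|x w IH]; first by rewrite cnt_nil oppr0.
rewrite inv_cons cnt_cat IH !cnt_cons cnt_nil addr0 opprD addrC; congr (_ + _)%R.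
by rewrite /linv /sgnl /=; case: (x.1 == i); case: (x.2); rewrite ?oppr0 ?opprK.
Qed.

Lemma cnt_nseq i r n : cnt i (nseq n (r, false)) = (if r == i then n%:Z else 0)%R.
Proof.
elim: n => [|n IH]; first by rewrite cnt_nil; case: ifP.
rewrite [nseq _ _]/= cnt_cons IH /sgnl /=; case: ifP => _; rewrite ?addr0 //.
Qed.

Lemma cnt_Pw i r n : cnt i (Pw r n) = (if (i < r)%N then n%:Z else 0)%R.
Proof.
elim: r => [|r IH]; first by rewrite cnt_nil.
rewrite [Pw _ _]/= cnt_cat IH cnt_nseq.
case: (ltngtP i r) => h.
- have -> : (i < r.+1) = true by lia.
  by rewrite addr0.
- have -> : (i < r.+1) = false by lia.
  by rewrite addr0.
- by rewrite h ltnSn add0r.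
Qed.

Definition cB m k n j := cnt m.-1 (Phin m k n [:: (m + j, false)]).
Definition SB m k n j := cnt m.-1 (Phin m k n (Bs m (iota 1 j))).

Lemma cB0 m k j : 0 < m -> cB m k 0 j = 0%R.
Proof.
move=> hm; rewrite /cB /= cnt_cons cnt_nil addr0.
case: eqP => // /= h; lia.
Qed.

Lemma cBS m k n j : j < m -> cB m k n.+1 j = (n.+1%:Z + SB m k n j)%R.
Proof.
move=> hj; rewrite /cB (cnt_eqv _ (@PhinB m k n j (ltnW hj))).
rewrite !cnt_cat cnt_inv cnt_cat cnt_inv !cnt_Pw !cnt_cons cnt_nil.
have h1 : m.-1 < m by lia.
have h2 : (m.-1 < j) = false by apply/negbTE; lia.
have h3 : (m + 0 == m.-1) = false by apply/negbTE; lia.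
rewrite h1 h2 h3 /SB. by rewrite !add0r !subr0.
Qed.

Lemma SBS m k n j : SB m k n j.+1 = (SB m k n j + cB m k n j.+1)%R.
Proof.
rewrite /SB /cB (_ : iota 1 j.+1 = iota 1 j ++ [:: 1 + j]); last by rewrite -[j.+1]addn1 iotaD.
by rewrite /Bs map_cat Phin_cat cnt_cat add1n.
Qed.

Lemma SB0 m k n : SB m k n 0 = 0%R.
Proof. by rewrite /SB /= Phin_nil cnt_nil. Qed.

Lemma cB_closed m k n j : 0 < m -> j < m -> cB m k n j = Posz 'C(n + j, j.+1).
Proof.
move=> hm; elim: n j => [|n IH] j hj.
  by rewrite cB0 // add0n bin_small.
elim: j hj => [|j IHj] hj.
  by rewrite cBS // SB0 addr0 addn0 bin1.
rewrite cBS // SBS addrA -cBS; last by lia.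
rewrite IHj; last by lia.
rewrite IH // -PoszD.
have -> : n.+1 + j.+1 = (n + j.+1).+1 by lia.
by rewrite binS addnC addSn addnS.
Qed.

Lemma abE m k w i j : ab_word m k w i j = cnt i w.
Proof. by rewrite mxE. Qed.

Definition okw m k (w : word) := all (fun x : letter => x.1 < m + k) w.

Lemma okw_cat m k u v : okw m k (u ++ v) = okw m k u && okw m k v.
Proof. exact: all_cat. Qed.

Lemma okw_inv m k w : okw m k (inv_word w) = okw m k w.
Proof. by rewrite /okw /inv_word all_rev all_map. Qed.

Lemma okw_A m k r : r <= m + k -> okw m k (Aprefix r).
Proof. move=> h; apply/allP => x /mapP [i]; rewrite mem_iota => hi -> /=; lia. Qed.

Lemma okw_B m k j : j <= k -> okw m k (Bprefix m j).
Proof. move=> h; apply/allP => x /mapP [i]; rewrite mem_iota => hi -> /=; lia. Qed.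

Lemma okw_gen m k g : g < m + k -> okw m k (phi_gen m k g).
Proof.
move=> hg; rewrite /phi_gen; case: ifP => h.
  rewrite !okw_cat okw_inv okw_A /=; last lia.
  by rewrite hg.
rewrite !okw_cat okw_inv !okw_A ?okw_B //; lia.
Qed.

Lemma okw_img m k x : x.1 < m + k -> okw m k (img m k x).
Proof. move=> h; rewrite /img; case: ifP => _; rewrite ?okw_inv; exact: okw_gen. Qed.

Lemma okw_Phi m k w : okw m k w -> okw m k (Phi m k w).
Proof.
elim: w => // x w IH /= /andP [h1 h2].
by rewrite Phi_cons okw_cat okw_img // IH.
Qed.

Lemma okw_Phin m k n w : okw m k w -> okw m k (Phin m k n w).
Proof. elim: n => // n IH h. rewrite PhinS. apply: okw_Phi. exact: IH. Qed.

Lemma cnt_img_sum m k i x : x.1 < m + k ->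
  cnt i (img m k x) =
  (\sum_(l < m + k) cnt i (phi_gen m k l) * (if x.1 == l then sgnl x else 0))%R.
Proof.
move=> hx.
rewrite (bigD1 (Ordinal hx)) //= eqxx big1 ?addr0.
  rewrite /img /sgnl; case: (x.2); rewrite ?cnt_inv ?mulrN1 ?mulr1 //.
move=> l hl; have -> : (x.1 == l) = false.
  apply/negbTE; apply: contra hl => /eqP e; apply/eqP; apply: val_inj; by rewrite /= e.
by rewrite mulr0.
Qed.

Lemma cnt_Phi m k i w : okw m k w ->
  cnt i (Phi m k w) = (\sum_(l < m + k) cnt i (phi_gen m k l) * cnt l w)%R.
Proof.
elim: w => [|x w IH] /=.
  by move=> _; rewrite cnt_nil big1 // => l _; rewrite cnt_nil mulr0.
move=> /andP [h1 h2].
rewrite Phi_cons cnt_cat IH // cnt_img_sum // -big_split /=.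
apply: eq_bigr => l _. by rewrite cnt_cons mulrDr.
Qed.

Lemma ab_Phi m k w : okw m k w ->
  ab_word m k (Phi m k w) = (phi_ab m k *m ab_word m k w)%R.
Proof.
move=> h; apply/matrixP => i j; rewrite abE !mxE cnt_Phi //.
by apply: eq_bigr => l _; rewrite !mxE.
Qed.

Lemma ab_R m k w : ab_word m k (reduce w) = ab_word m k w.
Proof. by apply/matrixP => i j; rewrite !abE cnt_R. Qed.

Lemma okBk m k : 1 <= k -> okw m k (Bk m k).
Proof. move=> h; rewrite /okw /Bk /= andbT; lia. Qed.

Lemma phi_ab_iterE m k n : 1 <= k ->
  phi_ab_iter m k n = ab_word m k (Phin m k n (Bk m k)).
Proof.
move=> hk; rewrite /phi_ab_iter; elim: n => [|n IH].
  by rewrite expr0 mul1mx.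
rewrite exprS -mulmxE -mulmxA IH PhinS ab_Phi //.
exact: okw_Phin (okBk m hk).
Qed.

Lemma phi_lenE m k n : phi_len m k n = size (reduce (Phin m k n (Bk m k))).
Proof. by rewrite /phi_len iter_phi. Qed.

Lemma absz_triangle (a b : int) : (absz (a + b)%R <= absz a + absz b)%N.
Proof. lia. Qed.

Lemma l1_size p w : (\sum_(i < p) absz (cnt i w) <= size w)%N.
Proof.
elim: w => [|x w IH].
  by rewrite big1 // => i _; rewrite cnt_nil.
have H1 : (\sum_(i < p) absz (if x.1 == i then sgnl x else 0%R) <= 1)%N.
  case: (ltnP x.1 p) => hx.
    rewrite (bigD1 (Ordinal hx)) //= eqxx big1 ?addn0.
      by rewrite /sgnl; case: (x.2).
    move=> l hl; have -> : (x.1 == l) = false.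
      apply/negbTE; apply: contra hl => /eqP e; apply/eqP; apply: val_inj; by rewrite /= e.
    by [].
  rewrite big1 // => l _; have -> : (x.1 == l) = false by apply/negbTE; apply/eqP => e; have := ltn_ord l; move: hx; rewrite e; lia.
  by [].
apply: leq_trans (_ : \sum_(i < p) (absz (if x.1 == i then sgnl x else 0%R) + absz (cnt i w)) <= _)%N.
  apply: leq_sum => i _; rewrite cnt_cons; exact: absz_triangle.
rewrite big_split /= -add1n; exact: leq_add H1 IH.
Qed.

Lemma l1_le_size m k w : l1norm (ab_word m k w) <= size w.
Proof.
rewrite /l1norm; apply: leq_trans (l1_size (m + k) w).
by rewrite leq_eqVlt; apply/orP; left; apply/eqP; apply: eq_bigr => i _; rewrite abE.
Qed.

Lemma linf_ge p (v : 'cV[int]_p) i : absz (v i ord0) <= linfnorm v.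
Proof. rewrite /linfnorm; exact: (@leq_bigmax _ (fun i0 : 'I_p => absz (v i0 ord0)) i). Qed.

Lemma linf_l1 p (v : 'cV[int]_p) : linfnorm v <= l1norm v.
Proof. apply/bigmax_leqP => i _; by rewrite /l1norm (bigD1 i) //= leq_addr. Qed.

Lemma l1_linf p (v : 'cV[int]_p) : l1norm v <= p * linfnorm v.
Proof.
rewrite /l1norm; apply: leq_trans (_ : \sum_(i < p) linfnorm v <= _).
  by apply: leq_sum => i _; apply: linf_ge.
by rewrite sum_nat_const card_ord.
Qed.

Lemma ffact_ge n j : n ^ j.+1 <= (n + j) ^_ j.+1.
Proof.
elim: j => [|j IH]; first by rewrite addn0 ffactn1 expn1.
rewrite addnS ffactSS expnS.
apply: leq_mul => //; lia.
Qed.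

Lemma asym_nat (f g : nat -> nat) (c d c' d' : nat) : 0 < c -> 0 < c' ->
  (forall n, f n <= c * g n + d) -> (forall n, g n <= c' * f n + d') -> asym_equiv f g.
Proof.
move=> hc hc' H1 H2.
exists (c%:R)%R, (d%:R)%R, (c'%:R)%R, (d'%:R)%R.
rewrite !ltr0n !ler0n hc hc'; do 4! split => //.
by move=> n; rewrite -!natrM -!natrD !ler_nat.
Qed.

Lemma pow_bound n k : 0 < k -> n.+1 ^ k <= 2 ^ k * n ^ k + 1.
Proof.
move=> hk; case: n => [|n]; first by rewrite exp1n exp0n // muln0.
rewrite -expnMn; apply: leq_trans (leq_addr _ _); rewrite leq_exp2r //; lia.
Qed.

Theorem corollary8p14 (m k : nat) (hk1 : 1 <= k) (hkm : k <= m) :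
  asym_equiv (fun n => phi_len m k n) (fun n => l1norm (phi_ab_iter m k n)) /\
  asym_equiv (fun n => l1norm (phi_ab_iter m k n)) (fun n => linfnorm (phi_ab_iter m k n)) /\
  asym_equiv (fun n => linfnorm (phi_ab_iter m k n)) (fun n => n ^ k).
Proof.
set K := m + 2 * k + 2.
have hm : 0 < m by lia.
have hk' : k.-1 < k by lia.
have F1 : forall n, l1norm (phi_ab_iter m k n) <= phi_len m k n.
  by move=> n; rewrite phi_ab_iterE // -ab_R phi_lenE l1_le_size.
have F2 : forall n, phi_len m k n <= (K * 2 ^ k) * n ^ k + K.
  move=> n; rewrite phi_lenE.
  have := @lenB_bound m k n k.-1; rewrite /lenB prednK //.
  move=> /(_ (leqnn k) hkm) h.
  apply: leq_trans h _.
  have := pow_bound n hk1. rewrite -/K. nia.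
have F3 : forall n, linfnorm (phi_ab_iter m k n) <= l1norm (phi_ab_iter m k n) by move=> n; exact: linf_l1.
have F3' : forall n, l1norm (phi_ab_iter m k n) <= (m + k) * linfnorm (phi_ab_iter m k n) by move=> n; exact: l1_linf.
have F4 : forall n, n ^ k <= k`! * linfnorm (phi_ab_iter m k n).
  move=> n.
  have hi : m.-1 < m + k by lia.
  have := linf_ge (phi_ab_iter m k n) (Ordinal hi).
  rewrite phi_ab_iterE // abE /Bk /=.
  have := @cB_closed m k n k.-1 hm (leq_trans hk' hkm).
  rewrite /cB => ->. rewrite absz_nat prednK // => h.
  apply: leq_trans (_ : n ^ k <= 'C(n + k.-1, k) * k`!) _.
    rewrite bin_ffact. have := ffact_ge n k.-1. by rewrite prednK.
  by rewrite mulnC leq_mul2l h orbT.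
split; last split.
- apply: (@asym_nat _ _ (K * 2 ^ k * k`!) K 1 0).
  + rewrite !muln_gt0 expn_gt0 fact_gt0 /K; lia.
  + by [].
  + move=> n; apply: leq_trans (F2 n) _.
    have h3 : n ^ k <= k`! * l1norm (phi_ab_iter m k n).
      apply: leq_trans (F4 n) _; by rewrite leq_mul2l F3 orbT.
    by rewrite leq_add2r -[K * 2 ^ k * k`! * _]mulnA leq_mul2l h3 orbT.
  + by move=> n; rewrite mul1n addn0.
- apply: (@asym_nat _ _ (m + k) 0 1 0); first lia; first by [].
  + by move=> n; rewrite addn0.
  + by move=> n; rewrite mul1n addn0.
- apply: (@asym_nat _ _ (K * 2 ^ k) K k`! 0).
  + rewrite !muln_gt0 expn_gt0 /K; lia.
  + exact: fact_gt0.
  + move=> n; apply: leq_trans (F3 n) _; apply: leq_trans (F1 n) _; exact: F2.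
  + by move=> n; rewrite addn0.
Qed.
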